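(* Let $A$ and $B$ be rings, $f: A\to B$ a ring homomorphism and $J$ a proper ideal of $B$. Then: (1) If $A\bowtie^{f}J$ is an Armendariz ring, then $A$ is an Armendariz ring. (2) If $A$ and $f(A)+J$ are Armendariz rings, then $A\bowtie^{f}J$ is an Armendariz ring.
   Context: All rings are associative with identity (not necessarily commutative), ring homomorphisms are unital, and ideals are two-sided. For a ring homomorphism $f:A\to B$ and an ideal $J$ of $B$, the amalgamation of $A$ with $B$ along $J$ with respect to $f$ is the subring $A\bowtie^{f}J=\{(a,f(a)+j)\mid a\in A,\ j\in J\}$ of $A\times B$; $f(A)+J=\{f(a)+j: a\in A, j\in J\}$ is a subring of $B$. A ring $R$ is Armendariz if whenever $p(x)=\sum_{i=0}^n a_ix^i$ and $q(x)=\sum_{j=0}^m b_jx^j$ in $R[x]$ satisfy $p(x)q(x)=0$, then $a_ib_j=0$ for all $i,j$. *)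

(* Defs.v *)
From HB Require Import structures.
From mathcomp Require Import all_boot all_order all_algebra.
Set Implicit Arguments. Unset Strict Implicit. Unset Printing Implicit Defensive.
Import GRing.Theory.
Local Open Scope ring_scope.

Definition two_sided_ideal (R : nzRingType) (J : R -> Prop) : Prop :=
  [/\ J 0,
      (forall x y, J x -> J y -> J (x - y)),
      (forall r x, J x -> J (r * x)) &
      (forall r x, J x -> J (x * r))].

Definition proper_two_sided_ideal (R : nzRingType) (J : R -> Prop) : Prop :=
  two_sided_ideal J /\ ~ J 1.

(* Armendariz property of the subring S of R (S given by its carrier):
   whenever p, q have all coefficients in S and p q = 0 in S[x]
   (equivalently in R[x], since S is a subring), all products of
   coefficients vanish. *)
Definition armendariz_on (R : nzRingType) (S : R -> Prop) : Prop :=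
  forall p q : {poly R},
    (forall i, S p`_i) -> (forall i, S q`_i) -> p * q = 0 ->
    forall i j, p`_i * q`_j = 0.

Definition armendariz (R : nzRingType) : Prop := armendariz_on (fun _ : R => True).

Definition amalgamation (A B : nzRingType) (f : {rmorphism A -> B}) (J : B -> Prop)
  : (A * B)%type -> Prop :=
  fun x => exists a j, J j /\ x = (a, f a + j).

Definition fA_plus_J (A B : nzRingType) (f : {rmorphism A -> B}) (J : B -> Prop)
  : B -> Prop :=
  fun b => exists a j, J j /\ b = f a + j.

(* Main.v *)
Require Import Defs.
From HB Require Import structures.
From mathcomp Require Import all_boot all_order all_algebra.
Local Open Scope ring_scope.
Import GRing.Theory.

Section Aux.
Variables (A B : nzRingType) (f : {rmorphism A -> B}).
Definition gpair (a : A) : (A * B)%type := (a, f a).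
Fact gpair_sub : {morph gpair : x y / x - y}.
Proof. by move=> x y; rewrite /gpair rmorphB. Qed.
Fact gpair_mon : GRing.monoid_morphism gpair.
Proof. by split; rewrite /gpair ?rmorph1 // => x y; rewrite rmorphM. Qed.
HB.instance Definition _ := GRing.isZmodMorphism.Build A (A * B)%type gpair gpair_sub.
HB.instance Definition _ := GRing.isMonoidMorphism.Build A (A * B)%type gpair gpair_mon.
End Aux.

Theorem theorem2p2 (A B : nzRingType) (f : {rmorphism A -> B}) (J : B -> Prop)
  (hJ : proper_two_sided_ideal J) :
  (armendariz_on (amalgamation f J) -> armendariz A) /\
  (armendariz A -> armendariz_on (fA_plus_J f J) ->
     armendariz_on (amalgamation f J)).
Proof.
have [[J0 _ _ _] _] := hJ.
split.
  move=> H p q _ _ pq i j.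
  have := H (map_poly (@gpair A B f) p) (map_poly (@gpair A B f) q).
  have hc : forall r : {poly A}, forall k, amalgamation f J (map_poly (@gpair A B f) r)`_k.
    by move=> r k; rewrite coef_map; exists r`_k, 0; split => //; rewrite addr0.
  have e : map_poly (@gpair A B f) p * map_poly (@gpair A B f) q = 0.
    by rewrite -rmorphM pq rmorph0.
  move=> /(_ (hc p) (hc q) e i j); rewrite !coef_map /= /gpair.
  by case.
move=> HA HB P Q HP HQ PQ i j.
have h1 := HA (map_poly fst P) (map_poly fst Q) (fun _ => I) (fun _ => I).
have := h1 _ i j; rewrite !coef_map /= => {}h1.
have h2 := HB (map_poly snd P) (map_poly snd Q).
have := h2 _ _ _ i j; rewrite !coef_map /= => {}h2.
have e1 : map_poly fst P * map_poly fst Q = 0 by rewrite -rmorphM PQ rmorph0.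
have e2 : map_poly snd P * map_poly snd Q = 0 by rewrite -rmorphM PQ rmorph0.
have {h1}h1 := h1 e1.
have {h2}h2 : (P`_i).2 * (Q`_j).2 = 0.
  apply: h2 => // k; rewrite coef_map /=.
  - by have [a [b [Jb ->]]] := HP k; exists a, b.
  - by have [a [b [Jb ->]]] := HQ k; exists a, b.
move: h1 h2; case: (P`_i) => x1 x2; case: (Q`_j) => y1 y2 /= h1 h2.
by rewrite -[RHS]/(0 : A, 0 : B) -[(x1, x2) * (y1, y2)]/(x1 * y1, x2 * y2) h1 h2.
Qed.
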